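(* For an index $i\geq k$ (and $i<s$), the following hold: if $i<s-2$, then $\tilde\Lambda$ has no order-$i$ seeds; if $i=s-2$, then the only order-$i$ seed of $\tilde\Lambda$ is $\lambda_s+1$; if $i=s-1$, then the only order-$i$ seeds of $\tilde\Lambda$ are $\lambda_s+1$ and $\lambda_s+2$.
   Context: A numerical semigroup is a subset $\Lambda\subseteq\mathbb{N}_0$ containing $0$, closed under addition, with finite complement; its genus $g$ is the number of gaps (elements of $\mathbb{N}_0\setminus\Lambda$). Write $\Lambda=\{\lambda_i\}_{i\geq 0}$ with $0=\lambda_0<\lambda_1<\lambda_2<\cdots$; let $k$ be the smallest index with $\lambda_i=i+g$ for all $i\geq k$, and $c=\lambda_k=k+g$ the conductor. A generator of a numerical semigroup is a non-zero element that is not the sum of two non-zero elements of it. Fix an element $\lambda_s$ with $s\geq k$ that is a generator of $\Lambda$ (an order-zero seed), and let $\tilde\Lambda=\Lambda\setminus\{\lambda_s\}$, a numerical semigroup of genus $g+1$ with elements $\tilde\lambda_i=\lambda_i$ for $i<s$, $\tilde\lambda_i=\lambda_{i+1}$ for $i\geq s$, and conductor $\lambda_s+1$. For $0\leq i<s$, an order-$i$ seed of $\tilde\Lambda$ is an element $\lambda_t$ with $t>s$ such that $\lambda_t+\lambda_i$ is a generator of $\tilde\Lambda_i=\Lambda\setminus\{\lambda_1,\dots,\lambda_i,\lambda_s\}$. *)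

(* Defs.v *)
From mathcomp Require Import all_boot.
Set Implicit Arguments. Unset Strict Implicit. Unset Printing Implicit Defensive.

Definition numerical_semigroup (L : pred nat) : Prop :=
  [/\ L 0, (forall a b, L a -> L b -> L (a + b)) & exists N, forall n, N <= n -> L n].

Definition enumerates (L : pred nat) (lam : nat -> nat) : Prop :=
  (forall i, lam i < lam i.+1) /\ (forall n, L n <-> exists i, lam i = n).

Definition genus (L : pred nat) (g : nat) : Prop :=
  exists N, (forall n, N <= n -> L n) /\ \sum_(n < N) (~~ L n) = g.

Definition conductor_index (lam : nat -> nat) (g k : nat) : Prop :=
  (forall i, k <= i -> lam i = i + g) /\
  (forall k', (forall i, k' <= i -> lam i = i + g) -> k <= k').

Definition generator (L : pred nat) (x : nat) : Prop :=
  [/\ L x, x != 0 & ~ exists a b, [/\ 0 < a, 0 < b, L a, L b & a + b = x]].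

Definition tildeL (L : pred nat) (lam : nat -> nat) (s i : nat) : pred nat :=
  fun n => [&& L n, n != lam s & ~~ has (fun j => n == lam j) (iota 1 i)].

Definition order_seed (L : pred nat) (lam : nat -> nat) (s i x : nat) : Prop :=
  exists t, [/\ s < t, x = lam t & generator (tildeL L lam s i) (x + lam i)].

(* Main.v *)
Require Import Defs.
From mathcomp Require Import all_boot.
From mathcomp Require Import zify.

Lemma mem_tilde (L : pred nat) (lam : nat -> nat) (g k s i n : nat) :
  numerical_semigroup L -> enumerates L lam -> conductor_index lam g k ->
  k <= i -> i < s ->
  (tildeL L lam s i n <-> (n = 0 \/ (i.+1 + g <= n /\ n <> s + g))).
Proof.
move=> [L0 _ _] [inc mem] [cond _] ki hs.
have mono : {homo lam : a b / a < b >-> a < b}.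
  by apply: homo_ltn => // ? ? ?; apply: ltn_trans.
have lam0 : lam 0 = 0.
  have [j hj] := (mem 0).1 L0.
  case: j hj => // j hj; have := mono 0 j.+1 isT; lia.
have lams : lam s = s + g by apply: cond; lia.
have lami : lam i = i + g by apply: cond; lia.
rewrite /tildeL; split.
- move=> /and3P [Ln ns hn].
  have [j hj] := (mem n).1 Ln.
  case: j hj => [|j] hj; first by left; rewrite -hj.
  right.
  case: (leqP j.+1 i) => ji.
    exfalso; move/negP: hn; apply; apply/hasP; exists j.+1.
      by rewrite mem_iota; lia.
    by rewrite hj.
  have : lam j.+1 = j.+1 + g by apply: cond; lia.
  move/eqP: ns; rewrite lams; lia.
- move=> H.
  have nonhas : forall n, (forall j, 1 <= j <= i -> lam j != n) ->
      ~~ has (fun j => n == lam j) (iota 1 i).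
    move=> n0 Hj; apply/hasPn => j; rewrite mem_iota => hj.
    rewrite eq_sym; apply: Hj; lia.
  case: H => [-> | [h1 h2]].
  + apply/and3P; split => //.
      by rewrite lams; apply/eqP; lia.
    apply: nonhas => j hj; have := mono 0 j; rewrite lam0; move=> h.
    apply/eqP => e; rewrite e in h; have := h ltac:(lia); lia.
  + apply/and3P; split.
    * apply/(mem n).2; exists (n - g); rewrite cond; lia.
    * rewrite lams; apply/eqP; lia.
    * apply: nonhas => j hj; apply/eqP => e.
      case: (ltnP j i) => ji.
        have := mono j i ji; lia.
      have ej : j = i by lia.
      rewrite ej in e; lia.
Qed.

Lemma notgen (T : pred nat) (m p y : nat) :
  (forall n, T n <-> (n = 0 \/ (m <= n /\ n <> p))) -> 0 < m ->
  m.*2.+2 <= y -> ~ generator T y.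
Proof.
move=> HT m0 hy [_ _ H]; apply: H.
have mk : forall a, m <= a -> m <= y - a -> a <> p -> y - a <> p ->
    exists a0 b, [/\ 0 < a0, 0 < b, T a0, T b & a0 + b = y].
  move=> a h1 h2 h3 h4; exists a, (y - a); split; try lia.
    by apply/HT; right.
  by apply/HT; right.
case: (eqVneq m p) => e1; case: (eqVneq (y - m) p) => e2.
- apply: (mk m.+1); lia.
- apply: (mk m.+1); lia.
- case: (eqVneq (y - m.+1) p) => e3.
    apply: (mk m.+2); lia.
  apply: (mk m.+1); lia.
- apply: (mk m); lia.
Qed.

Theorem lemma3 (L : pred nat) (lam : nat -> nat) (g k s i : nat) :
  numerical_semigroup L ->
  enumerates L lam ->
  genus L g ->
  conductor_index lam g k ->
  k <= s ->
  generator L (lam s) ->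
  k <= i -> i < s ->
  [/\ (i.+2 < s -> forall x, ~ order_seed L lam s i x),
      (i.+2 = s -> forall x, order_seed L lam s i x <-> x = lam s + 1)
    & (i.+1 = s -> forall x, order_seed L lam s i x <-> (x = lam s + 1 \/ x = lam s + 2))].
Proof.
move=> NS EN _ CI ks _ ki hs.
have HT : forall n, tildeL L lam s i n <-> (n = 0 \/ (i.+1 + g <= n /\ n <> s + g)) := fun n => @mem_tilde L lam g k s i n NS EN CI ki hs.
have cond := CI.1.
have lams : lam s = s + g by apply: cond; lia.
have lami : lam i = i + g by apply: cond; lia.
have lamt : forall t, s < t -> lam t = t + g by move=> t ht; apply: cond; lia.
have seedE : forall x, order_seed L lam s i x <->
    exists t, s < t /\ x = t + g /\ generator (tildeL L lam s i) (x + (i + g)).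
  move=> x; split.
    by case=> t [h1 h2 h3]; exists t; rewrite -lami -(lamt t h1) -h2.
  by case=> t [h1 [h2 h3]]; exists t; split => //; [rewrite lamt | rewrite lami].
have ng := fun y => @notgen (tildeL L lam s i) (i.+1 + g) (s + g) y HT ltac:(lia).
split.
- move=> h x /seedE [t [ht [-> G]]]; apply: (ng _ _ G); lia.
- move=> h x; rewrite seedE lams; split.
    move=> [t [ht [-> G]]].
    case: (leqP t s.+1) => ts; first lia.
    exfalso; apply: (ng _ _ G); lia.
  move=> ->; exists s.+1; split; first lia; split; first lia.
  split.
  + apply/HT; right; lia.
  + apply/eqP; lia.
  + move=> [a [b [a0 b0 /HT Ta /HT Tb e]]].
    clear -h a0 b0 Ta Tb e; case: Ta => [?|[? ?]]; case: Tb => [?|[? ?]]; lia.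
- move=> h x; rewrite seedE lams; split.
    move=> [t [ht [-> G]]].
    case: (leqP t s.+2) => ts; first lia.
    exfalso; apply: (ng _ _ G); lia.
  move=> hx; have [t [ht ->]] : exists t, t \in [:: s.+1; s.+2] /\ x = t + g.
    by case: hx => ->; [exists s.+1 | exists s.+2]; rewrite !inE eqxx ?orbT; split => //; lia.
  move: ht; rewrite !inE => /orP ht.
  exists t; split; first (case: ht => /eqP; lia); split => //.
  split.
  + apply/HT; right; case: ht => /eqP; lia.
  + apply/eqP; case: ht => /eqP; lia.
  + move=> [a [b [a0 b0 /HT Ta /HT Tb e]]].
    clear -h a0 b0 Ta Tb e ht; case: Ta => [?|[? ?]]; case: Tb => [?|[? ?]]; case: ht => /eqP; lia.
Qed.
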